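(* There is an equality $(\Theta\otimes\mathbb C)\setminus\mathcal H_{\mathbb C}=\bigcup_{L\in\operatorname{Mut}_0(N)}\varphi_L(\mathbb H_+)$, and the union on the right is disjoint.
   Context: $R$ is a three-dimensional complete local Gorenstein normal $\mathbb C$-algebra with an isolated cDV singularity; $f\colon X\to\operatorname{Spec}R$ a flopping contraction ($X$ Gorenstein terminal) with $n$ exceptional curves; $N=R\oplus N_1\oplus\dots\oplus N_n$ the push-forward of the standard Van den Bergh tilting bundle. Mutation: for modifying $L=\bigoplus_{j=0}^nL_j$ and index $i$, $\nu_iL$ is the Iyama–Wemyss mutation replacing the $i$th summand; $\operatorname{Mut}_0(N)$ is the set of iterated mutations of $N$ never mutating at index $0$ (where $N_0=R$). For $L\in\operatorname{Mut}_0(N)$, $\mathcal K_L=K_0(\operatorname{per}\operatorname{End}_R(L))=\bigoplus_{j=0}^n\mathbb Z[P_j]$ with $P_j=\operatorname{Hom}_R(L,L_j)$, $\Theta_L=\mathcal K_L/\mathbb Z[P_0]$ with basis $[P_1],\dots,[P_n]$, $\Theta=\Theta_N$. Mutation functors $\mathbf R\operatorname{Hom}(\operatorname{Hom}_R(L,\nu_iL),-)$ for $i\ne0$ induce isomorphisms $\Theta_L\to\Theta_{\nu_iL}$, and $\varphi_L\colon\Theta_L\otimes\mathbb C\to\Theta\otimes\mathbb C$ is induced by a shortest walk from $L$ to $N$ inside $\operatorname{Mut}_0(N)$ (independent of the choice). With $C_+$ the open positive orthant, the cones $\varphi_L(C_+)$, $L\in\operatorname{Mut}_0(N)$, are the chambers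 of a finite simplicial real hyperplane arrangement $\mathcal H$ in $\Theta\otimes\mathbb R$; $\mathcal H_{\mathbb C}=\bigcup_{H\in\mathcal H}H\otimes\mathbb C$. $\mathbb H=\{re^{\mathrm i\pi\theta}:r>0,0<\theta\le1\}$ is the semi-closed upper half plane and $\mathbb H_+=\{z\in\Theta_L\otimes\mathbb C: z_j\in\mathbb H\text{ for all }1\le j\le n\}$. *)

(* Defs.v *)
From HB Require Import structures.
From mathcomp Require Import all_boot all_order all_algebra.
Set Implicit Arguments. Unset Strict Implicit. Unset Printing Implicit Defensive.
Import Order.TTheory GRing.Theory Num.Theory.
Local Open Scope ring_scope.

(* Theta (x) R is modelled as row vectors 'rV[R]_n (coordinates in the basis
   [P_1],...,[P_n]); a complex vector z in Theta (x) C is a pair (x, y) of real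
   vectors, z = x + i y. *)

Definition pairing (R : ringType) (n : nat) (a x : 'rV[R]_n) : R :=
  \sum_(i < n) a 0 i * x 0 i.

(* The semi-closed upper half plane  H = { r e^{i pi t} : r > 0, 0 < t <= 1 },
   for the complex number a + i b. *)
Definition in_upper (R : numDomainType) (a b : R) : bool :=
  (0 < b) || ((b == 0) && (a < 0)).

(* Complexification H_C: the union of H (x) C over the hyperplanes
   H = ker(pairing a _) of the arrangement (given by normal vectors). *)
Definition in_HC (R : ringType) (n : nat) (hyps : seq 'rV[R]_n)
    (x y : 'rV[R]_n) : Prop :=
  exists2 a, a \in hyps & pairing a x = 0 /\ pairing a y = 0.

(* Chambers of the real arrangement: the regions
   { x | sign (a . x) = sign (a . x0) for all a } for a point x0 off all
   hyperplanes (= the connected components of the complement). *)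
Definition is_chamber (R : numDomainType) (n : nat) (hyps : seq 'rV[R]_n)
    (C : 'rV[R]_n -> Prop) : Prop :=
  exists x0 : 'rV[R]_n,
    (forall a, a \in hyps -> pairing a x0 != 0) /\
    (forall x, C x <-> (forall a, a \in hyps -> 0 < pairing a x * pairing a x0)).

(* phi_L(C_+), where phi_L is given (on row vectors) by w |-> w *m M. *)
Definition orthant_img (R : numDomainType) (n : nat) (M : 'M[R]_n)
    (x : 'rV[R]_n) : Prop :=
  exists2 w : 'rV[R]_n, (forall i, 0 < w 0 i) & x = w *m M.

(* phi_L(H_+), phi_L the C-linear extension of the real map M:
   z = x + i y lies in it iff z = (u + i v) M with (u_j + i v_j) in H for all j. *)
Definition in_phi_Hplus (R : numDomainType) (n : nat) (M : 'M[R]_n)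
    (x y : 'rV[R]_n) : Prop :=
  exists u v : 'rV[R]_n,
    (forall i, in_upper (u 0 i) (v 0 i)) /\ x = u *m M /\ y = v *m M.

(* Main.v *)
Require Import Defs.
From HB Require Import structures.
From mathcomp Require Import all_boot all_order all_algebra.
From mathcomp Require Import ring lra.
Import Order.TTheory GRing.Theory Num.Theory.
Local Open Scope ring_scope.

Section Aux.
Set Implicit Arguments.
Unset Strict Implicit.
Variable R : realFieldType.

Lemma pairingB n (a y x : 'rV[R]_n) (k : R) :
  pairing a (k *: y - x) = k * pairing a y - pairing a x.
Proof.
rewrite /pairing mulr_sumr -sumrB; apply: eq_bigr => i _; rewrite !mxE; ring.
Qed.

Lemma le_sum_seq (T : eqType) (s : seq T) (F : T -> R) a :
  (forall b, 0 <= F b) -> a \in s -> F a <= \sum_(b <- s) F b.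
Proof.
move=> F0; elim: s => [|c s IH] //=; rewrite in_cons big_cons.
case/orP=> [/eqP->|/IH H].
  by rewrite lerDl sumr_ge0.
by apply: le_trans H _; rewrite lerDr.
Qed.

Lemma sign3 (A B C : R) : 0 < A * B -> 0 < A * C -> 0 < B * C.
Proof.
have [Ap|An|->] := ltgtP A 0; last by rewrite mul0r ltxx.
  by rewrite (nmulr_rgt0 B) // (nmulr_rgt0 C) // => hB hC; rewrite nmulr_rgt0.
by rewrite (pmulr_rgt0 B) // (pmulr_rgt0 C) // => hB hC; rewrite mulr_gt0.
Qed.

Lemma Kbound n (u v : 'rV[R]_n) :
  (forall j, in_upper (u 0 j) (v 0 j)) ->
  exists K, forall K', K <= K' -> forall j, 0 < K' * v 0 j - u 0 j.
Proof.
move=> hup; set F := fun j : 'I_n => `|u 0 j| / v 0 j.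
have vge0 j : 0 <= v 0 j.
  by case/orP: (hup j) => [/ltW //|/andP[/eqP-> _]].
have F0 j : 0 <= F j by rewrite /F divr_ge0.
exists (1 + \sum_(j <- index_enum 'I_n) F j) => K' hK j.
have hF := @le_sum_seq _ (index_enum 'I_n) F j F0 (mem_index_enum j).
case/orP: (hup j) => [vp|/andP[/eqP-> un]]; last by rewrite mulr0 sub0r oppr_gt0.
have e1 : F j * v 0 j = `|u 0 j| by rewrite /F divfK // gt_eqF.
have h1 : (1 + F j) * v 0 j <= K' * v 0 j.
  apply: ler_wpM2r; [exact: ltW | apply: le_trans _ hK; rewrite lerD2l //].
have := ler_norm (u 0 j).
rewrite mulrDl mul1r e1 in h1. lra.
Qed.

Lemma upper_of n (u v : 'rV[R]_n) (M : 'M[R]_n) K :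
  M \in unitmx ->
  (forall K', K <= K' -> forall j, 0 < K' * v 0 j - u 0 j) ->
  forall j, in_upper (u 0 j) (v 0 j).
Proof.
move=> _ H j; rewrite /in_upper.
have [vp|vn|v0] := ltgtP (v 0 j) 0; last 2 first.
- by apply/orP; left.
- move: (H K (lexx _) j); rewrite v0 mulr0 sub0r oppr_gt0 => ->.
  done.
exfalso.
set K' := `|K| + `|u 0 j| / (- v 0 j) + 1.
have hK : K <= K'.
  rewrite /K' -addrA; apply: le_trans (ler_norm K) _.
  by rewrite lerDl addr_ge0 // divr_ge0 // oppr_ge0 ltW.
have := H K' hK j.
have e1 : `|u 0 j| / (- v 0 j) * v 0 j = - `|u 0 j|.
  by field; rewrite lt_eqF.
have e2 : K' * v 0 j = `|K| * v 0 j - `|u 0 j| + v 0 j.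
  by rewrite /K' !mulrDl e1 mul1r.
have h3 : `|K| * v 0 j <= 0 by rewrite mulr_ge0_le0 // ltW.
have := ler_norm (- u 0 j); rewrite normrN => h7.
have := ler_norm (u 0 j); have := normr_ge0 (u 0 j).
rewrite e2 => h4 h5 h6; lra.
Qed.

Lemma orth_of n (M : 'M[R]_n) (u v x y : 'rV[R]_n) K' :
  x = u *m M -> y = v *m M -> (forall j, 0 < K' * v 0 j - u 0 j) ->
  orthant_img M (K' *: y - x).
Proof.
move=> -> -> H; exists (K' *: v - u) => [i|]; first by rewrite !mxE.
by rewrite mulmxBl scalemxAl.
Qed.

Lemma chamber_eq n (hyps : seq 'rV[R]_n) (C C' : 'rV[R]_n -> Prop) p :
  is_chamber hyps C -> is_chamber hyps C' -> C p -> C' p ->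
  forall x, C x <-> C' x.
Proof.
move=> [x0 [_ h0]] [x1 [_ h1]] /h0 Hp /h1 Hp' x; rewrite h0 h1.
have S a : a \in hyps -> 0 < pairing a x0 * pairing a x1.
  by move=> ha; apply: sign3 (Hp a ha) (Hp' a ha).
split=> H a ha.
- apply: (@sign3 (pairing a x0)); first by rewrite mulrC; exact: H.
  exact: S.
- apply: (@sign3 (pairing a x1)); first by rewrite mulrC; exact: H.
  by rewrite mulrC; exact: S.
Qed.

End Aux.
Theorem proposition3p10 (R : realFieldType) (n : nat) (I : Type)
    (M : I -> 'M[R]_n) (hyps : seq 'rV[R]_n)
    (hM : forall L, M L \in unitmx)
    (hnz : forall a, a \in hyps -> a != 0)
    (hchamber : forall L, is_chamber hyps (orthant_img (M L)))
    (hall : forall C, is_chamber hyps C ->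
              exists L, forall x, C x <-> orthant_img (M L) x)
    (hinj : forall L L', (forall x, orthant_img (M L) x <-> orthant_img (M L') x) ->
              L = L') :
  (forall x y : 'rV[R]_n,
      ~ in_HC hyps x y <-> exists L, in_phi_Hplus (M L) x y) /\
  (forall (L L' : I) (x y : 'rV[R]_n),
      in_phi_Hplus (M L) x y -> in_phi_Hplus (M L') x y -> L = L').
Proof.
split; last first.
  move=> L L' x y [u [v [hu [ex ey]]]] [u' [v' [hu' [ex' ey']]]].
  have [K1 HK1] := Kbound hu; have [K2 HK2] := Kbound hu'.
  set K := Num.max K1 K2.
  have h1 : K1 <= K by rewrite le_max lexx.
  have h2 : K2 <= K by rewrite le_max lexx orbT.
  apply: hinj; apply: (chamber_eq (hchamber L) (hchamber L') (p := K *: y - x)).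
    exact: orth_of ex ey (HK1 K h1).
  exact: orth_of ex' ey' (HK2 K h2).
move=> x y; split; last first.
  move=> [L [u [v [hu [ex ey]]]]] [a ha [hax hay]].
  have [K HK] := Kbound hu.
  have := orth_of ex ey (HK K (lexx _)).
  have [x0 [_ h0]] := hchamber L.
  move/h0/(_ a ha); rewrite pairingB hax hay mulr0 subr0 mul0r.
  by rewrite ltxx.
move=> nHC.
set F := fun a : 'rV[R]_n => `|pairing a x| / `|pairing a y|.
have F0 a : 0 <= F a by rewrite /F divr_ge0.
set K := 1 + \sum_(a <- hyps) F a.
have P : forall K', K <= K' -> forall a, a \in hyps ->
    0 < pairing a (K' *: y - x) * pairing a (K *: y - x).
  move=> K' hK a ha; rewrite !pairingB.
  have hF := le_sum_seq F0 ha.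
  have [b0|bn0] := eqVneq (pairing a y) 0.
    have cn0 : pairing a x != 0.
      by apply/eqP => c0; apply: nHC; exists a.
    rewrite b0 !mulr0 !sub0r mulrNN.
    have [cn|cp|c0] := ltgtP (pairing a x) 0.
    - by rewrite nmulr_rgt0.
    - by rewrite mulr_gt0.
    - by rewrite c0 eqxx in cn0.
  set b := pairing a y; set c := pairing a x.
  have e1 : F a * `|b| = `|c| by rewrite /F divfK // normr_eq0.
  have e2 : `|b| * `|b| = b * b 
    by case: (ltgtP b 0) => h; [rewrite ltr0_norm // mulrNN | rewrite gtr0_norm // | rewrite h normr0].
  have e3 : c * b <= `|c| * `|b| by rewrite -normrM ler_norm.
  have bb : 0 < b * b.
    by case: (ltgtP b 0) => h; [rewrite nmulr_rgt0 | rewrite mulr_gt0 | move: bn0; rewrite -/b h eqxx].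
  have nb : 0 <= `|b| := normr_ge0 b.
  have key : forall K'', 1 + F a <= K'' -> 0 < b * (K'' * b - c).
    move=> K'' hK''.
    have h4 : (1 + F a) * (b * b) <= K'' * (b * b) by apply: ler_wpM2r; [exact: ltW|].
    have h5 : (1 + F a) * (b * b) = b * b + `|c| * `|b| by rewrite -e2 -e1; ring.
    nra.
  have hK1 : 1 + F a <= K by rewrite lerD2l.
  apply: (@sign3 _ b); first by apply: key; apply: le_trans hK.
  exact: key.
pose C := fun z => forall a, a \in hyps -> 0 < pairing a z * pairing a (K *: y - x).
have hC : is_chamber hyps C.
  exists (K *: y - x); split => // a ha.
  by apply/eqP => e; have := P K (lexx _) a ha; rewrite e mul0r ltxx.
have [L HL] := hall C hC.
exists L; exists (x *m invmx (M L)), (y *m invmx (M L)).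
split; last by rewrite !(mulmxKV (hM L)).
apply: (upper_of (M := M L) (K := K)) => // K' hK' j.
have : orthant_img (M L) (K' *: y - x) by apply/HL => a ha; exact: P.
move=> [w wpos ew].
have : w = K' *: (y *m invmx (M L)) - x *m invmx (M L).
  by rewrite scalemxAl -mulmxBl ew mulmxK.
move=> ew'; have := wpos j; rewrite ew' !mxE //.
Qed.
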